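(* Let $\Lambda$ be a row-finite $k$-graph with no sources, and let $\{t_\lambda\}_{\lambda\in\Lambda}$ and $\{\tilde t_\lambda\}_{\lambda\in\Lambda}$ be purely atomic representations of $C^*(\Lambda)$ on Hilbert spaces $\mathcal H$ and $\mathcal H'$, with associated projection valued measures $P$ and $\tilde P$. Suppose $U:\mathcal H\to\mathcal H'$ is a bounded operator with $\tilde t_\lambda U=Ut_\lambda$ and $\tilde t_\lambda^*U=Ut_\lambda^*$ for all $\lambda\in\Lambda$. Then $\tilde P(\{\omega\})U=UP(\{\omega\})$ for every $\omega\in\Lambda^\infty$. Moreover, if $U$ is unitary, then the supports $\{\omega:P(\{\omega\})\neq0\}$ and $\{\omega:\tilde P(\{\omega\})\neq0\}$ coincide.
   Context: A $k$-graph ($k\ge1$) is a countable small category $\Lambda$ with a functor $d:\Lambda\to\mathbb N^k$ satisfying unique factorization: if $d(\lambda)=m+n$ there are unique $\mu,\nu$ with $\lambda=\mu\nu$, $d(\mu)=m$, $d(\nu)=n$. $\Lambda^0$ = vertices, $r,s$ = range, source, $v\Lambda^n=\{\lambda:d(\lambda)=n,r(\lambda)=v\}$; row-finite: each $v\Lambda^n$ finite; no sources: each $v\Lambda^n$ nonempty. Infinite paths are degree-preserving functors $x:\Omega_k\to\Lambda$, where $\Omega_k$ has objects $\mathbb N^k$, morphisms $(p,q)$ with $p\le q$ and $d(p,q)=q-p$; $\Lambda^\infty$ is the set of them. Cylinder sets $Z(\lambda)=\{x:x(0,d(\lambda))=\lambda\}$ generate the Borel $\sigma$-algebra. A representation of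 $C^*(\Lambda)$ is a family of partial isometries $\{t_\lambda\}$ satisfying (CK1) $\{t_v\}_{v\in\Lambda^0}$ mutually orthogonal projections, (CK2) $t_\lambda t_\eta=t_{\lambda\eta}$ when $s(\lambda)=r(\eta)$, (CK3) $t_\lambda^*t_\lambda=t_{s(\lambda)}$, (CK4) $t_v=\sum_{\lambda\in v\Lambda^n}t_\lambda t_\lambda^*$. Its projection valued measure $P$ on Borel sets of $\Lambda^\infty$ satisfies $P(Z(\lambda))=t_\lambda t_\lambda^*$. Purely atomic: there is a Borel $\Omega$ with $P(\Lambda^\infty\setminus\Omega)=0$, $P(\{\omega\})\ne0$ for $\omega\in\Omega$, $\sum_{\omega\in\Omega}P(\{\omega\})=\mathrm{Id}$ strongly. *)

(* Defs.v *)
From HB Require Import structures.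
From mathcomp Require Import all_boot all_order all_algebra.
From mathcomp Require Import complex.
From mathcomp Require Import all_classical all_reals.
From mathcomp Require Import measurable_structure.

Set Implicit Arguments.
Unset Strict Implicit.
Unset Printing Implicit Defensive.

Import Order.TTheory GRing.Theory Num.Theory.
Local Open Scope classical_set_scope.
Local Open Scope ring_scope.

Definition Nk (k : nat) := {ffun 'I_k -> nat}.
Definition zeroNk k : Nk k := [ffun => 0%N].
Definition addNk k (m n : Nk k) : Nk k := [ffun i => (m i + n i)%N].
Definition subNk k (m n : Nk k) : Nk k := [ffun i => (m i - n i)%N].
Definition leNk k (m n : Nk k) : bool := [forall i, (m i <= n i)%N].

(** Objects = vertices (type [kvert]), morphisms = paths (type [kpath]);
      composition [kcomp l m] is "l m" (l after m), meaningful when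
      [ks l = kr m]. *)

Record kgraph (k : nat) := KGraph {
  kvert : countType;
  kpath :> countType;
  kr : kpath -> kvert;
  ks : kpath -> kvert;
  kid : kvert -> kpath;
  kcomp : kpath -> kpath -> kpath;
  kdeg : kpath -> Nk k;
  kr_id : forall v, kr (kid v) = v;
  ks_id : forall v, ks (kid v) = v;
  kr_comp : forall l m, ks l = kr m -> kr (kcomp l m) = kr l;
  ks_comp : forall l m, ks l = kr m -> ks (kcomp l m) = ks m;
  kcomp_idl : forall l, kcomp (kid (kr l)) l = l;
  kcomp_idr : forall l, kcomp l (kid (ks l)) = l;
  kcompA : forall l m n, ks l = kr m -> ks m = kr n ->
      kcomp l (kcomp m n) = kcomp (kcomp l m) n;
  kdeg_id : forall v, kdeg (kid v) = zeroNk k;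
  kdeg_comp : forall l m, ks l = kr m ->
      kdeg (kcomp l m) = addNk (kdeg l) (kdeg m);
  kfactor : forall l (m n : Nk k), kdeg l = addNk m n ->
      exists mu nu, [/\ ks mu = kr nu, l = kcomp mu nu,
                        kdeg mu = m & kdeg nu = n];
  kfactor_uniq : forall mu nu mu' nu',
      ks mu = kr nu -> ks mu' = kr nu' ->
      kcomp mu nu = kcomp mu' nu' -> kdeg mu = kdeg mu' -> kdeg nu = kdeg nu' ->
      mu = mu' /\ nu = nu'
}.

Arguments kr {k L} : rename.
Arguments ks {k L} : rename.
Arguments kid {k L} : rename.
Arguments kcomp {k L} : rename.
Arguments kdeg {k L} : rename.

Definition vLn k (L : kgraph k) (v : kvert L) (n : Nk k) : set L :=
  [set l : L | kr l = v /\ kdeg l = n].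

Definition row_finite k (L : kgraph k) :=
  forall (v : kvert L) (n : Nk k), finite_set (vLn v n).
Definition no_sources k (L : kgraph k) :=
  forall (v : kvert L) (n : Nk k), vLn v n !=set0.

(** * Infinite paths: degree-preserving functors Omega_k -> Lambda.
      A morphism (p,q) of Omega_k (p <= q) is sent to [ipf p q].
      The values of [ipf p q] for p not <= q carry no meaning; they are
      normalized to [ipf p p] so that equality of infinite paths is
      equality of functors. *)

Record infpath k (L : kgraph k) := InfPath {
  ipf : Nk k -> Nk k -> L;
  ip_deg : forall p q, leNk p q -> kdeg (ipf p q) = subNk q p;
  ip_id : forall p, ipf p p = kid (kr (ipf p p));
  ip_comp : forall p q r, leNk p q -> leNk q r ->
      ks (ipf p q) = kr (ipf q r) /\ kcomp (ipf p q) (ipf q r) = ipf p r;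
  ip_junk : forall p q, ~~ leNk p q -> ipf p q = ipf p p
}.

HB.instance Definition _ k (L : kgraph k) := gen_eqMixin (infpath L).
HB.instance Definition _ k (L : kgraph k) := gen_choiceMixin (infpath L).

Definition cyl k (L : kgraph k) (l : L) : set (infpath L) :=
  [set x | ipf x (zeroNk k) (kdeg l) = l].

Definition borel_inf k (L : kgraph k) : set (set (infpath L)) :=
  smallest (sigma_algebra setT) (range (@cyl k L)).

Section HilbertDefs.
Variable R : realType.
Variable V : lmodType R[i].
Variable ip : V -> V -> R[i].

(* squared norm is ip x x *)
Definition hcvg (u : nat -> V) (l : V) :=
  forall eps : R[i], 0 < eps ->
    exists N, forall n, (N <= n)%N -> ip (u n - l) (u n - l) < eps.

Definition hcauchy (u : nat -> V) :=
  forall eps : R[i], 0 < eps ->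
    exists N, forall m n, (N <= m)%N -> (N <= n)%N ->
      ip (u m - u n) (u m - u n) < eps.
End HilbertDefs.

Record hilbert (R : realType) := Hilbert {
  hsp :> lmodType R[i];
  hinner : hsp -> hsp -> R[i];
  hinner_linl : forall (a : R[i]) x y z,
      hinner (a *: x + y) z = a * hinner x z + hinner y z;
  hinner_conj : forall x y, hinner y x = (hinner x y)^*;
  hinner_ge0 : forall x, 0 <= hinner x x;
  hinner_eq0 : forall x, hinner x x = 0 -> x = 0;
  hcomplete : forall u : nat -> hsp, hcauchy hinner u ->
      exists l, hcvg hinner u l
}.

Arguments hinner {R h}.

Section Operators.
Variable R : realType.

Definition linear_op (H H' : hilbert R) (T : H -> H') :=
  forall (a : R[i]) x y, T (a *: x + y) = a *: T x + T y.

Definition bounded_op (H H' : hilbert R) (T : H -> H') :=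
  linear_op T /\
  exists M : R[i], forall x, hinner (T x) (T x) <= M * hinner x x.

Definition is_adjoint (H H' : hilbert R) (T : H -> H') (S : H' -> H) :=
  forall x y, hinner (T x) y = hinner x (S y).

Definition projection (H : hilbert R) (T : H -> H) :=
  bounded_op T /\ T \o T = T /\ is_adjoint T T.

Definition zero_op (H H' : hilbert R) : H -> H' := fun _ => 0.
Arguments zero_op : clear implicits.

Definition unitary (H H' : hilbert R) (U : H -> H') :=
  bounded_op U /\ (forall x y, hinner (U x) (U y) = hinner x y) /\
  (forall y, exists x, U x = y).

Definition nonzero_op (H H' : hilbert R) (T : H -> H') :=
  T <> zero_op H H'.
End Operators.
Arguments zero_op {R} H H'.

(** * Representations of C^*(Lambda): Cuntz-Krieger Lambda-families of
      partial isometries [t l] on H, with adjoints [ts l] = (t l)^*. *)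

Definition CK_family (R : realType) k (L : kgraph k) (H : hilbert R)
    (t ts : L -> H -> H) :=
  [/\ (forall l, bounded_op (t l) /\ is_adjoint (t l) (ts l) /\
                 t l \o ts l \o t l = t l),
      (forall v, projection (t (kid v))) /\
      (forall v w, v <> w -> t (kid v) \o t (kid w) = zero_op H H),
      (forall l m, ks l = kr m -> t (kcomp l m) = t l \o t m),
      (forall l, ts l \o t l = t (kid (ks l))) &
      (forall v n h, t (kid v) h = \sum_(l \in vLn v n) t l (ts l h))].

Definition pvm (R : realType) k (L : kgraph k) (H : hilbert R)
    (P : set (infpath L) -> H -> H) :=
  [/\ (forall A, borel_inf A -> projection (P A)),
      P set0 = zero_op H H,
      P setT = id,
      (forall A B, borel_inf A -> borel_inf B -> P (A `&` B) = P A \o P B) &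
      (forall A : nat -> set (infpath L),
          (forall n, borel_inf (A n)) -> trivIset setT A ->
          forall h, hcvg hinner (fun n => \sum_(i < n) P (A i) h)
                                (P (\bigcup_i A i) h))].

Definition pvm_of_rep (R : realType) k (L : kgraph k) (H : hilbert R)
    (t ts : L -> H -> H) (P : set (infpath L) -> H -> H) :=
  pvm P /\ forall l, P (cyl l) = t l \o ts l.

(** sum_{w in Om} P({w}) = Id in the strong operator topology
    (unordered sum: convergence of the net of finite partial sums) *)
Definition strong_sum_id (R : realType) k (L : kgraph k) (H : hilbert R)
    (P : set (infpath L) -> H -> H) (Om : set (infpath L)) :=
  forall (h : H) (eps : R[i]), 0 < eps ->
    exists F0, [/\ finite_set F0, F0 `<=` Om &
      forall F, finite_set F -> F0 `<=` F -> F `<=` Om ->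
        hinner (h - \sum_(w \in F) P [set w] h)
               (h - \sum_(w \in F) P [set w] h) < eps].

Definition purely_atomic (R : realType) k (L : kgraph k) (H : hilbert R)
    (P : set (infpath L) -> H -> H) :=
  exists Om : set (infpath L),
    [/\ borel_inf Om,
        P (~` Om) = zero_op H H,
        (forall w, Om w -> nonzero_op (P [set w])) &
        strong_sum_id P Om].

(* Main.v *)
Require Import Defs.
From HB Require Import structures.
From mathcomp Require Import all_boot all_order all_algebra.
From mathcomp Require Import complex.
From mathcomp Require Import all_classical all_reals.
From mathcomp Require Import measurable_structure.
Import Order.TTheory GRing.Theory Num.Theory.
Local Open Scope classical_set_scope.
Local Open Scope ring_scope.
From mathcomp Require Import ring.
Import Order.TTheory GRing.Theory Num.Theory.
Local Open Scope classical_set_scope.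
Local Open Scope ring_scope.

Section Hil.
Variable R : realType.
Variable H : hilbert R.

Lemma ipDl (x y z : H) : hinner (x + y) z = hinner x z + hinner y z.
Proof. by rewrite -[x in LHS]scale1r hinner_linl mul1r. Qed.

Lemma ip0l (z : H) : hinner 0 z = 0.
Proof. have h := ipDl 0 0 z; rewrite addr0 in h; by apply: (addrI (hinner 0 z)); rewrite addr0 -h. Qed.

Lemma ipNl (x z : H) : hinner (- x) z = - hinner x z.
Proof.
have := hinner_linl (-1) x 0 z.
by rewrite scaleN1r addr0 ip0l addr0 mulN1r.
Qed.

Lemma ipDr (x y z : H) : hinner z (x + y) = hinner z x + hinner z y.
Proof. by rewrite [LHS]hinner_conj ipDl rmorphD [hinner z x]hinner_conj [hinner z y]hinner_conj. Qed.

Lemma ipNr (x z : H) : hinner z (- x) = - hinner z x.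
Proof. by rewrite [LHS]hinner_conj ipNl rmorphN [hinner z x]hinner_conj. Qed.

Lemma ip_para (x y : H) :
  hinner (x - y) (x - y) + hinner (x + y) (x + y) =
  2 * hinner x x + 2 * hinner y y.
Proof.
rewrite !ipDl !ipDr !ipNl !ipNr !opprK.
ring.
Qed.

Lemma ge0_small_eq0 (a : R[i]) : 0 <= a -> (forall e : R[i], 0 < e -> a < e) -> a = 0.
Proof.
move=> a0 h; apply/eqP; apply: contraT => na.
have ap : 0 < a by rewrite lt_def na a0.
by have := h a ap; rewrite ltxx.
Qed.

Lemma hcvg_uniq (u : nat -> H) a b :
  hcvg hinner u a -> hcvg hinner u b -> a = b.
Proof.
move=> ha hb; apply/eqP; rewrite -subr_eq0; apply/eqP; apply: hinner_eq0.
apply: ge0_small_eq0; first exact: hinner_ge0.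
move=> e e0.
have e4 : 0 < e / 4 by rewrite divr_gt0.
have [N1 h1] := ha _ e4; have [N2 h2] := hb _ e4.
set n := maxn N1 N2.
have /h1 l1 : (N1 <= n)%N by rewrite leq_maxl.
have /h2 l2 : (N2 <= n)%N by rewrite leq_maxr.
have := ip_para (u n - b) (u n - a).
have -> : u n - b - (u n - a) = a - b.
  by rewrite opprB addrC addrA subrK.
move=> eq.
have : hinner (a - b) (a - b) <= 2 * hinner (u n - b) (u n - b) + 2 * hinner (u n - a) (u n - a).
  by rewrite -eq lerDl hinner_ge0.
move=> /le_lt_trans; apply.
have -> : e = 2 * (e / 4) + 2 * (e / 4).
  by field.
by rewrite ltrD // ltr_pM2l.
Qed.

Lemma hcvg_ev (u : nat -> H) a N : (forall n, (N <= n)%N -> u n = a) -> hcvg hinner u a.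
Proof. by move=> h e e0; exists N => n /h ->; rewrite subrr ip0l. Qed.

Variable H' : hilbert R.
Variable U : H -> H'.
Hypothesis bU : bounded_op U.

Lemma U0 : U 0 = 0.
Proof. have h := bU.1 1 0 0; rewrite !scale1r addr0 in h; by apply: (addrI (U 0)); rewrite addr0 -h. Qed.
Lemma UD x y : U (x + y) = U x + U y.
Proof. by rewrite -[x in LHS]scale1r bU.1 scale1r. Qed.
Lemma UN x : U (- x) = - U x.
Proof. by have := bU.1 (-1) x 0; rewrite !scaleN1r addr0 U0 addr0. Qed.
Lemma UB x y : U (x - y) = U x - U y.
Proof. by rewrite UD UN. Qed.
Lemma Usum n (f : 'I_n -> H) : U (\sum_(i < n) f i) = \sum_(i < n) U (f i).
Proof.
elim: n f => [|n IH] f; first by rewrite !big_ord0 U0.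
by rewrite !big_ord_recr UD IH.
Qed.

Lemma U_cvg (u : nat -> H) l : hcvg hinner u l -> hcvg hinner (U \o u) (U l).
Proof.
move=> hl e e0.
have [M hM] := bU.2.
set c := `|M| + 1.
have c0 : 0 < c by rewrite ltr_wpDl.
have [N hN] := hl (e / c) (divr_gt0 e0 c0).
exists N => n /hN hn /=.
rewrite -UB.
set d := u n - l.
have d0 := hinner_ge0 d.
apply: (le_lt_trans (hM d)).
have Md : 0 <= M * hinner d d := le_trans (hinner_ge0 _) (hM d).
apply: (le_lt_trans (y := c * hinner d d)).
  rewrite -(ger0_norm Md) normrM (ger0_norm d0) ler_wpM2r //.
  by rewrite /c lerDl.
by rewrite mulrC -ltr_pdivlMr.
Qed.

End Hil.
Set Implicit Arguments.
Unset Strict Implicit.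

Section Borel.
Variables (k : nat) (L : kgraph k).
Let B := @borel_inf k L.

Lemma borel_sa : sigma_algebra setT B.
Proof. exact: smallest_sigma_algebra. Qed.

Lemma borelC A : B A -> B (~` A).
Proof. by move=> hA; rewrite -setTD; by case: borel_sa => _ + _; apply. Qed.
Lemma borel0 : B set0.
Proof. by case: borel_sa. Qed.
Lemma borelT : B setT.
Proof. by rewrite -setC0; apply: borelC; exact: borel0. Qed.
Lemma borelU (F : nat -> set (infpath L)) : (forall n, B (F n)) -> B (\bigcup_n F n).
Proof. by case: borel_sa => _ _; apply. Qed.
Lemma borelI (F : nat -> set (infpath L)) : (forall n, B (F n)) -> B (\bigcap_n F n).
Proof.
move=> hF; rewrite -[X in B X]setCK setC_bigcap; apply: borelC; apply: borelU.
by move=> n; apply: borelC.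
Qed.
Lemma borel_cyl l : B (cyl l).
Proof. rewrite /B /borel_inf; apply: (@sub_smallest _ _ _ (range (@cyl k L))) => //; by exists l. Qed.
End Borel.

Section PVM.
Variables (R : realType) (k : nat) (L : kgraph k) (H : hilbert R).
Variable P : set (infpath L) -> H -> H.
Hypothesis hP : pvm P.

Lemma pvmC A h : borel_inf A -> P (~` A) h = h - P A h.
Proof.
move=> bA.
case: hP => _ P0 PT _ Padd.
have bF : forall n, borel_inf (bigcup2 A (~` A) n).
  move=> [|[|n]] /=; [exact: bA| exact: borelC | exact: borel0].
have tF : trivIset setT (bigcup2 A (~` A)) by rewrite -trivIset_bigcup2 setICr.
have := Padd _ bF tF h.
rewrite bigcup2E setUv PT => hc.
have hc2 : hcvg hinner (fun n => \sum_(i < n) P (bigcup2 A (~` A) i) h) (P A h + P (~` A) h).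
  apply: (@hcvg_ev _ _ _ _ 2) => n n2.
  rewrite -(subnK n2) addn2 big_ord_recl big_ord_recl /= big1 ?addr0 //.
  by move=> i _; rewrite P0.
have eqh := @hcvg_uniq _ _ _ _ _ hc hc2.
by apply/eqP; rewrite eq_sym subr_eq addrC; apply/eqP.
Qed.
End PVM.

Lemma borelI2 (k : nat) (L : kgraph k) (A B : set (infpath L)) :
  borel_inf A -> borel_inf B -> borel_inf (A `&` B).
Proof.
move=> hA hB; rewrite -bigcap2E; apply: borelI => -[|[|n]] /=; [exact: hA|exact: hB|exact: borelT].
Qed.

Definition cylI k (L : kgraph k) (s : seq L) : set (infpath L) :=
  foldr (fun l A => cyl l `&` A) setT s.

Lemma cylI_cat k (L : kgraph k) (s1 s2 : seq L) : cylI (s1 ++ s2) = cylI s1 `&` cylI s2.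
Proof.
elim: s1 => [|l s1 IH] /=; first by rewrite setTI.
by rewrite /cylI /= -/(cylI _) IH setIA.
Qed.

Section Commute.
Variables (R : realType) (k : nat) (L : kgraph k) (H H' : hilbert R).
Variables (t ts : L -> H -> H) (t' ts' : L -> H' -> H').
Variables (P : set (infpath L) -> H -> H) (P' : set (infpath L) -> H' -> H').
Variable U : H -> H'.
Hypotheses (hP : pvm_of_rep t ts P) (hP' : pvm_of_rep t' ts' P') (bU : bounded_op U).
Hypotheses (ht : forall l, t' l \o U = U \o t l) (hts : forall l, ts' l \o U = U \o ts l).

Let D := [set A : set (infpath L) | borel_inf A /\ P' A \o U = U \o P A].

Lemma ht' l y : t' l (U y) = U (t l y).
Proof. exact: (congr1 (fun f => f y) (ht l)). Qed.
Lemma hts' l y : ts' l (U y) = U (ts l y).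
Proof. exact: (congr1 (fun f => f y) (hts l)). Qed.

Let Gp := [set A : set (infpath L) | exists s, A = cylI s].

Lemma Gp_setI : setI_closed Gp.
Proof. by move=> A B [s1 ->] [s2 ->]; exists (s1 ++ s2); rewrite cylI_cat. Qed.

Lemma Gp_D : Gp `<=` D.
Proof.
move=> A [s ->]; elim: s => [|l s [bs cs]] /=.
  split; first exact: borelT.
  by case: hP => -[_ _ -> _ _] _; case: hP' => -[_ _ -> _ _] _.
split; first by apply: borelI2 => //; exact: borel_cyl.
case: hP => -[_ _ _ PI _] Pc; case: hP' => -[_ _ _ PI' _] Pc'.
rewrite (PI _ _ (borel_cyl _) bs) (PI' _ _ (borel_cyl _) bs) Pc Pc'.
apply: funext => x /=.
have := congr1 (fun f => f x) cs => /= ->; by rewrite hts' ht'.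
Qed.

Lemma D_dynkin : dynkin D.
Proof.
case: hP => -[_ _ PT _ Padd] Pc; case: hP' => -[_ _ PT' _ Padd'] Pc'.
split.
- by split; [exact: borelT | rewrite PT PT'].
- move=> A [bA cA]; split; first exact: borelC.
  apply: funext => x /=.
  rewrite (pvmC hP.1) // (pvmC hP'.1) //; have := congr1 (fun f => f x) cA => /= ->.
  by rewrite (@UB _ _ _ _ bU).
- move=> F tF hF; split; first by apply: borelU => n; exact: (hF n).1.
  apply: funext => h /=.
  have c1 := Padd' F (fun n => (hF n).1) tF (U h).
  have c2 := @U_cvg _ _ _ _ bU _ _ (Padd F (fun n => (hF n).1) tF h).
  apply: (@hcvg_uniq _ _ _ _ _ c1); move: c2; congr hcvg.
  apply: funext => n /=; rewrite (@Usum _ _ _ _ bU); apply: eq_bigr => i _.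
  by have := congr1 (fun f => f h) (hF i).2 => /= ->.
Qed.

Lemma commute_borel A : borel_inf A -> P' A \o U = U \o P A.
Proof.
move=> bA.
suff : D A by case.
have sub1 : @borel_inf k L `<=` <<s setT, Gp >>.
  apply: smallest_sub; first exact: smallest_sigma_algebra.
  move=> _ [l _ <-]; apply: (@sub_smallest _ _ Gp Gp) => //.
  by exists [:: l]; rewrite /cylI /= setIT.
apply: (lambda_system_subset Gp_setI (D := setT)).
- exact/dynkin_lambda_system/D_dynkin.
- exact: Gp_D.
- by [].
- exact: sub1.
Qed.
End Commute.

Section Single.
Variables (k : nat) (L : kgraph k).

Lemma infpath_ext (x w : infpath L) : (forall p q, ipf x p q = ipf w p q) -> x = w.
Proof.
case: x => f1 a1 b1 c1 d1; case: w => f2 a2 b2 c2 d2 /= E.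
have E' : f1 = f2 by apply: funext => p; apply: funext => q; exact: E.
subst f2; congr InfPath; exact: Prop_irrelevance.
Qed.

Definition nNk (n : nat) : Nk k := [ffun => n].

Lemma le0Nk (m : Nk k) : leNk (zeroNk k) m.
Proof. by apply/forallP => i; rewrite ffunE. Qed.
Lemma subNk0 (m : Nk k) : subNk m (zeroNk k) = m.
Proof. by apply/ffunP => i; rewrite !ffunE subn0. Qed.
Lemma leNkrr (m : Nk k) : leNk m m.
Proof. by apply/forallP => i. Qed.
Lemma leNk_trans (m n p : Nk k) : leNk m n -> leNk n p -> leNk m p.
Proof. by move=> /forallP h1 /forallP h2; apply/forallP => i; exact: leq_trans (h1 i) (h2 i). Qed.
Lemma leNk_big (m : Nk k) : leNk m (nNk (\max_i m i)).
Proof. by apply/forallP => i; rewrite ffunE; exact: leq_bigmax. Qed.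

Lemma in_cyl (w : infpath L) m : cyl (ipf w (zeroNk k) m) w.
Proof. by rewrite /cyl /= ip_deg ?le0Nk // subNk0. Qed.

Lemma cyl_eq (x w : infpath L) :
  (forall n, cyl (ipf w (zeroNk k) (nNk n)) x) -> x = w.
Proof.
move=> hx.
have h0 : forall m, ipf x (zeroNk k) m = ipf w (zeroNk k) m.
  move=> m; set M := nNk (\max_i m i).
  have hM : ipf x (zeroNk k) M = ipf w (zeroNk k) M.
    by have := hx (\max_i m i); rewrite /cyl /= ip_deg ?le0Nk // subNk0.
  have [sx cx] := ip_comp x (le0Nk m) (leNk_big m).
  have [sw cw] := ip_comp w (le0Nk m) (leNk_big m).
  have := @kfactor_uniq _ L _ _ _ _ sx sw.
  rewrite cx cw hM => /(_ erefl).
  rewrite !ip_deg ?le0Nk ?leNk_big // => /(_ erefl erefl) [] //.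
have hle : forall p q, leNk p q -> ipf x p q = ipf w p q.
  move=> p q lpq.
  have [sx cx] := ip_comp x (le0Nk p) lpq.
  have [sw cw] := ip_comp w (le0Nk p) lpq.
  have := @kfactor_uniq _ L _ _ _ _ sx sw.
  rewrite cx cw h0 => /(_ erefl).
  by rewrite !ip_deg ?le0Nk ?h0 // => /(_ erefl erefl) [].
apply: infpath_ext => p q; case lpq : (leNk p q); first exact: hle.
by rewrite !(ip_junk _ (negbT lpq)) hle // leNkrr.
Qed.

Lemma borel_single (w : infpath L) : borel_inf [set w].
Proof.
have -> : [set w] = \bigcap_n cyl (ipf w (zeroNk k) (nNk n)).
  apply/seteqP; split => x /=.
    by move=> -> n _; exact: in_cyl.
  by move=> h; apply: cyl_eq => n; exact: h.
by apply: borelI => n; exact: borel_cyl.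
Qed.
End Single.

Unset Implicit Arguments.

Theorem proposition3p7 (R : realType) (k : nat) (L : kgraph k)
    (H H' : hilbert R)
    (t ts : L -> H -> H) (t' ts' : L -> H' -> H')
    (P : set (infpath L) -> H -> H) (P' : set (infpath L) -> H' -> H')
    (U : H -> H') :
  (0 < k)%N ->
  row_finite L -> no_sources L ->
  CK_family t ts -> CK_family t' ts' ->
  pvm_of_rep t ts P -> pvm_of_rep t' ts' P' ->
  purely_atomic P -> purely_atomic P' ->
  bounded_op U ->
  (forall l, t' l \o U = U \o t l) ->
  (forall l, ts' l \o U = U \o ts l) ->
  (forall w : infpath L, P' [set w] \o U = U \o P [set w]) /\
  (unitary U ->
     [set w | nonzero_op (P [set w])] = [set w | nonzero_op (P' [set w])]).
Proof.
move=> _ _ _ _ _ hP hP' _ _ bU ht hts.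
have part1 : forall w, P' [set w] \o U = U \o P [set w].
  by move=> w; apply: (commute_borel hP hP' bU ht hts); exact: borel_single.
have pw : forall w x, P' [set w] (U x) = U (P [set w] x).
  by move=> w x; exact: (congr1 (fun f => f x) (part1 w)).
split => // -[_ [iso surj]].
have inj : forall x, U x = 0 -> x = 0.
  by move=> x Ux; apply: hinner_eq0; rewrite -iso Ux ip0l.
apply/seteqP; split => w /=.
- move=> nz E; apply: nz; apply: funext => x; apply: inj.
  by rewrite -pw E.
- move=> nz E; apply: nz; apply: funext => y.
  have [x <-] := surj y.
  by rewrite pw E /zero_op (@U0 _ _ _ _ bU).
Qed.
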